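(* For every even integer $s_x\ge 0$, $k^*(s_x,2)=2\,k^*(s_x,0)$.
   Context: For integers $a\le b$, $[a,b]$ denotes $\{a,\dots,b\}$. A planar additive basis for $R=[0,s_x]\times[0,s_y]$ is a set $A$ of points with non-negative integer coordinates with $A+A\supseteq R$ ($A+A$ the vector sumset, summands may coincide). For even $s_x,s_y$, a basis is restricted if $A\subseteq[0,s_x/2]\times[0,s_y/2]$. $k^*(s_x,s_y)$ denotes the minimum cardinality of a restricted planar additive basis for $[0,s_x]\times[0,s_y]$; in particular $k^*(s_x,0)$ is the minimum size of a set $E\subseteq[0,s_x/2]$ of integers with $E+E\supseteq[0,s_x]$. *)

(* Defs.v *)
From mathcomp Require Import all_boot.
Set Implicit Arguments. Unset Strict Implicit. Unset Printing Implicit Defensive.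

Definition rbox (sx sy : nat) : finType := ('I_(sx./2.+1) * 'I_(sy./2.+1))%type.

Definition restricted_basis (sx sy : nat) (A : {set rbox sx sy}) : bool :=
  [forall x : 'I_sx.+1, forall y : 'I_sy.+1,
    [exists a in A, exists b in A,
      (a.1 + b.1 == x :> nat) && (a.2 + b.2 == y :> nat)]].

(* The minimum ranges over all subsets of the box;
   the default #|box| is harmless since the full box is itself a basis for even
   sx, sy. *)
Definition kstar (sx sy : nat) : nat :=
  \big[minn/#|rbox sx sy|]_(A : {set rbox sx sy} | restricted_basis A) #|A|.

(* Main.v *)
Require Import Defs.
From mathcomp Require Import all_boot zify.
Set Implicit Arguments. Unset Strict Implicit. Unset Printing Implicit Defensive.

Lemma bigmin_le_seq (I : eqType) (r : seq I) (P : pred I) (F : I -> nat) d j :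
  j \in r -> P j -> \big[minn/d]_(i <- r | P i) F i <= F j.
Proof.
elim: r => [|x r IH] //= ; rewrite inE big_cons => /orP [/eqP <-|jr] Pj.
  by rewrite Pj geq_minl.
case: (P x); last exact: IH.
by rewrite geq_min (IH jr Pj) orbT.
Qed.

Lemma kstar_le sx sy (A : {set rbox sx sy}) : restricted_basis A -> kstar sx sy <= #|A|.
Proof.
move=> HA; rewrite /kstar.
by apply: (@bigmin_le_seq _ _ (fun A => restricted_basis A) (fun A => #|A|)) => //; rewrite mem_index_enum.
Qed.

Lemma full_basis sx sy : ~~ odd sx -> ~~ odd sy -> restricted_basis [set: rbox sx sy].
Proof.
move=> ox oy; have ex := even_halfK ox; have ey := even_halfK oy.
rewrite -addnn in ex ey.
apply/forallP => x; apply/forallP => y; apply/existsP.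
exists (inord (minn x (sx./2)), inord (minn y (sy./2))); rewrite inE /=.
apply/existsP; exists (inord (x - minn x (sx./2)), inord (y - minn y (sy./2))).
rewrite inE /=.
have hx := ltn_ord x; have hy := ltn_ord y.
rewrite !inordK; try lia.
Qed.

Lemma kstar_attained sx sy : ~~ odd sx -> ~~ odd sy ->
  exists A : {set rbox sx sy}, restricted_basis A /\ #|A| = kstar sx sy.
Proof.
move=> ox oy.
have : (kstar sx sy = #|rbox sx sy|) \/ exists A : {set rbox sx sy}, restricted_basis A /\ #|A| = kstar sx sy.
  rewrite /kstar; apply: (big_ind (fun k => (k = #|rbox sx sy|) \/ exists A : {set rbox sx sy}, restricted_basis A /\ #|A| = k)).
  - by left.
  - move=> a b Ha Hb; rewrite /minn; case: ltnP => _; [exact Ha|exact Hb].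
  - move=> A HA; right; by exists A.
case=> [->|//]; exists [set: rbox sx sy]; split; first exact: full_basis.
by rewrite cardsT.
Qed.

Lemma basisP sx sy (A : {set rbox sx sy}) :
  reflect (forall x y, x <= sx -> y <= sy -> exists a b, [/\ a \in A, b \in A,
             a.1 + b.1 = x :> nat & a.2 + b.2 = y :> nat])
          (restricted_basis A).
Proof.
apply: (iffP idP).
- move=> /forallP H x y hx hy.
  have /forallP H1 := H (Ordinal (hx : x < sx.+1)).
  have /existsP [a /andP [aA /existsP [b /andP [bA /andP [/eqP e1 /eqP e2]]]]]
    := H1 (Ordinal (hy : y < sy.+1)).
  by exists a, b.
- move=> H; apply/forallP => x; apply/forallP => y.
  have [a [b [aA bA e1 e2]]] := H x y (ltn_ord x) (ltn_ord y).
  apply/existsP; exists a; rewrite aA /=; apply/existsP; exists b.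
  by rewrite bA e1 e2 !eqxx.
Qed.

Lemma card_setX1 n (E : {set 'I_n}) : #|setX E [set: 'I_1]| = #|E|.
Proof. by rewrite cardsX cardsT card_ord muln1. Qed.

Theorem mainTheorem3 (sx : nat) : ~~ odd sx -> kstar sx 2 = 2 * kstar sx 0.
Proof.
move=> ox; apply/eqP; rewrite eqn_leq; apply/andP; split.
- have [A0 [HA0 cA0]] := kstar_attained ox (isT : ~~ odd 0).
  pose E : {set 'I_(sx./2.+1)} := [set x | ((x, ord0) : rbox sx 0) \in A0].
  have eA0 : A0 = setX E [set: 'I_1].
    apply/setP => -[x y]; rewrite !inE /= andbT.
    by rewrite (ord1 y).
  pose B2 : {set rbox sx 2} := setX E [set: 'I_2].
  have -> : 2 * kstar sx 0 = #|B2|.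
    by rewrite /B2 cardsX cardsT card_ord -cA0 eA0 card_setX1 mulnC.
  apply: kstar_le; apply/basisP => x y hx hy.
  have /basisP H0 := HA0.
  have [[a1 a2] [[b1 b2] [aA bA e1 _]]] := H0 x 0 hx (leqnn 0).
  have ha : y./2 < 2 by lia.
  have hb : y - y./2 < 2 by lia.
  exists (a1, Ordinal ha), (b1, Ordinal hb); split => //=; last by lia.
  + by rewrite /B2 in_setX in_setT andbT; move: aA; rewrite {1}eA0 in_setX => /andP [-> _].
  + by rewrite /B2 in_setX in_setT andbT; move: bA; rewrite {1}eA0 in_setX => /andP [-> _].
- have [B2 [HA2 cA2]] := kstar_attained ox (isT : ~~ odd 2).
  have /basisP H2 := HA2.
  pose E0 : {set 'I_(sx./2.+1)} := [set x | ((x, ord0) : rbox sx 2) \in B2].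
  pose E1 : {set 'I_(sx./2.+1)} := [set x | ((x, ord_max) : rbox sx 2) \in B2].
  have B0 : kstar sx 0 <= #|E0|.
    rewrite -card_setX1; apply: kstar_le; apply/basisP => x y hx hy.
    have [[a1 [u hu]] [[b1 [v hv]] [aA bA /= e1 e2]]] := H2 x 0 hx isT.
    exists (a1, ord0), (b1, ord0); split => //=; last by lia.
    + rewrite !inE andbT; have E2 : u = 0 by lia.
      by move: hu aA; rewrite E2 => hu; rewrite (bool_irrelevance hu (ltn0Sn 1)).
    + rewrite !inE andbT; have E2 : v = 0 by lia.
      by move: hv bA; rewrite E2 => hv; rewrite (bool_irrelevance hv (ltn0Sn 1)).
  have B1 : kstar sx 0 <= #|E1|.
    rewrite -card_setX1; apply: kstar_le; apply/basisP => x y hx hy.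
    have [[a1 [u hu]] [[b1 [v hv]] [aA bA /= e1 e2]]] := H2 x 2 hx isT.
    exists (a1, ord0), (b1, ord0); split => //=; last by lia.
    + rewrite !inE andbT; have E2 : u = 1 by lia.
      by move: hu aA; rewrite E2 => hu; rewrite (bool_irrelevance hu (ltnSn 1)).
    + rewrite !inE andbT; have E2 : v = 1 by lia.
      by move: hv bA; rewrite E2 => hv; rewrite (bool_irrelevance hv (ltnSn 1)).
  pose f0 := fun x : 'I_(sx./2.+1) => ((x, ord0) : rbox sx 2).
  pose f1 := fun x : 'I_(sx./2.+1) => ((x, ord_max) : rbox sx 2).
  have i0 : injective f0 by move=> x x' [].
  have i1 : injective f1 by move=> x x' [].
  have dis : f0 @: E0 :&: f1 @: E1 = set0.
    apply/setP => p; rewrite !inE.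
    apply/negP => /andP [/imsetP [x _ ->] /imsetP [x' _ [_]]] //.
  have sub : f0 @: E0 :|: f1 @: E1 \subset B2.
    apply/subsetP => p; rewrite inE => /orP [] /imsetP [x]; rewrite inE => h -> //.
  have := subset_leq_card sub.
  have := cardsUI (f0 @: E0) (f1 @: E1).
  rewrite dis cards0 addn0 !card_imset // cA2 => -> h; apply: leq_trans h. rewrite mul2n -addnn; exact: leq_add B0 B1.
Qed.
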